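(* Let $S$ be a monoid with the fem-property. Then an $S$-act is almost pure if and only if it is absolutely pure.
   Context: Let $S$ be a monoid. A (right) $S$-act is a set $A$ with a map $A\times S\to A$, $(a,s)\mapsto as$, such that $a1=a$ and $a(st)=(as)t$. An $S$-act is monogenic if it equals $cS$ for some element $c$, and finitely generated if it is a union of finitely many monogenic subacts. $S$ has the fem-property if every finitely generated $S$-act embeds (via an injective $S$-morphism) into a monogenic $S$-act. Given an $S$-act $A$ and a set $X$ of variables, an equation over $A$ is an expression of one of the forms $xs=yt$, $xs=xt$ or $xs=a$ with $x,y\in X$, $s,t\in S$, $a\in A$. If $A$ is a subact of $B$, a solution in $B$ of a set $\Sigma$ of such equations is a family $(b_x)_{x\in X}$ in $B$ with $b_xs=b_yt$ for each $xs=yt\in\Sigma$ and $b_xs=a$ for each $xs=a\in\Sigma$. $\Sigma$ is consistent if it has a solution in some $S$-act containing $A$ as a subact. $A$ is almost pure if every finite consistent set of equations over $A$ in one variable has a solution in $A$, and absolutely pure if every finite consistent set of equations over $A$ has a solution in $A$. *)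

(* Defs.v *)
From Stdlib Require Import List.
Import ListNotations.
Set Implicit Arguments.

Record monoid := Monoid {
  mcar :> Type;
  mmul : mcar -> mcar -> mcar;
  mone : mcar;
  mmulA : forall x y z, mmul x (mmul y z) = mmul (mmul x y) z;
  mmul1l : forall x, mmul mone x = x;
  mmul1r : forall x, mmul x mone = x
}.

Record act (S : monoid) := Act {
  acar :> Type;
  actf : acar -> S -> acar;
  actf1 : forall a, actf a (mone S) = a;
  actfM : forall a s t, actf a (mmul S s t) = actf (actf a s) t
}.
Arguments actf {S} _ _ _.

Definition is_morph {S : monoid} {A B : act S} (f : A -> B) : Prop :=
  forall (a : A) (s : S), f (actf A a s) = actf B (f a) s.

Definition injective {T U : Type} (f : T -> U) : Prop :=
  forall x y, f x = f y -> x = y.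

Definition embedding {S : monoid} {A B : act S} (f : A -> B) : Prop :=
  is_morph f /\ injective f.

Definition monogenic {S : monoid} (A : act S) : Prop :=
  exists c : A, forall a : A, exists s : S, a = actf A c s.

Definition fin_gen {S : monoid} (A : act S) : Prop :=
  exists cs : list A, forall a : A, exists c, In c cs /\ exists s : S, a = actf A c s.

Definition fem (S : monoid) : Prop :=
  forall A : act S, fin_gen A ->
    exists (B : act S) (f : A -> B), embedding f /\ monogenic B.

(* Equations over A in variables X: x s = y t (the form x s = x t being the
   case y = x), and x s = a. *)
Inductive equation (S : monoid) (A : act S) (X : Type) :=
  | EqVar : X -> S -> X -> S -> equation A X
  | EqConst : X -> S -> A -> equation A X.
Arguments EqVar {S A X}.
Arguments EqConst {S A X}.

Definition satisfies {S : monoid} {A B : act S} (f : A -> B) {X : Type}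
  (b : X -> B) (e : equation A X) : Prop :=
  match e with
  | EqVar x s y t => actf B (b x) s = actf B (b y) t
  | EqConst x s a => actf B (b x) s = f a
  end.

Definition solution_in {S : monoid} {A B : act S} (f : A -> B) {X : Type}
  (Sigma : list (equation A X)) (b : X -> B) : Prop :=
  forall e, In e Sigma -> satisfies f b e.

Definition solvable_in_self {S : monoid} {A : act S} {X : Type}
  (Sigma : list (equation A X)) : Prop :=
  exists b : X -> A, solution_in (fun a : A => a) Sigma b.

(* Consistent: solvable in some S-act containing A as a subact
   (i.e. into which A embeds). *)
Definition consistent {S : monoid} {A : act S} {X : Type}
  (Sigma : list (equation A X)) : Prop :=
  exists (B : act S) (f : A -> B), embedding f /\
    exists b : X -> B, solution_in f Sigma b.

Definition almost_pure {S : monoid} (A : act S) : Prop :=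
  forall Sigma : list (equation A unit), consistent Sigma -> solvable_in_self Sigma.

Definition absolutely_pure {S : monoid} (A : act S) : Prop :=
  forall (X : Type) (Sigma : list (equation A X)),
    consistent Sigma -> solvable_in_self Sigma.

(* Main.v *)
Require Import Defs.
From Stdlib Require Import List ClassicalEpsilon ProofIrrelevance.
Import ListNotations.

Lemma sig_eq {T : Type} (P : T -> Prop) (x y : sig P) :
  proj1_sig x = proj1_sig y -> x = y.
Proof.
  destruct x as [x px], y as [y py]; simpl; intros ->.
  f_equal; apply proof_irrelevance.
Qed.

Definition amj {S : monoid} {D B E : act S} (i : D -> B) (g : D -> E) (e : E)
  : B + {e : E | ~ exists d, g d = e} :=
  match excluded_middle_informative (exists d, g d = e) with
  | left H => inl (i (proj1_sig (constructive_indefinite_description _ H)))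
  | right H => inr (exist _ e H)
  end.

Definition amact {S : monoid} {D B E : act S} (i : D -> B) (g : D -> E)
  (p : B + {e : E | ~ exists d, g d = e}) (s : S) :=
  match p with
  | inl b => inl (actf B b s)
  | inr e => amj i g (actf E (proj1_sig e) s)
  end.

Lemma amj_g {S : monoid} {D B E : act S} (i : D -> B) (g : D -> E) :
  injective g -> forall d, amj i g (g d) = inl (i d).
Proof.
  intros Hg d. unfold amj.
  destruct (excluded_middle_informative _) as [H|H].
  - destruct (constructive_indefinite_description _ H) as [d' Hd']; simpl.
    rewrite (Hg _ _ Hd'). reflexivity.
  - exfalso; apply H; eauto.
Qed.

Lemma amj_out {S : monoid} {D B E : act S} (i : D -> B) (g : D -> E) e H :
  amj i g e = inr (exist _ e H).
Proof.
  unfold amj. destruct (excluded_middle_informative _) as [H'|H'].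
  - contradiction.
  - f_equal; apply sig_eq; reflexivity.
Qed.

Lemma amj_morph {S : monoid} {D B E : act S} (i : D -> B) (g : D -> E) :
  is_morph i -> embedding g ->
  forall e s, amj i g (actf E e s) = amact i g (amj i g e) s.
Proof.
  intros Hi [Hgm Hgi] e s.
  destruct (classic (exists d, g d = e)) as [[d <-]|H].
  - rewrite amj_g by assumption. simpl.
    rewrite <- Hgm, amj_g by assumption. rewrite Hi. reflexivity.
  - rewrite (amj_out i g e H). reflexivity.
Qed.

Definition amalgam {S : monoid} {D B E : act S} (i : D -> B) (g : D -> E)
  (Hi : is_morph i) (Hg : embedding g) : act S.
Proof.
  refine (@Act S (B + {e : E | ~ exists d, g d = e})%type (amact i g) _ _).
  - intros [b|[e He]]; simpl.
    + rewrite actf1; reflexivity.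
    + rewrite actf1. apply amj_out.
  - intros [b|[e He]] s t; simpl.
    + rewrite actfM; reflexivity.
    + rewrite actfM. apply amj_morph; assumption.
Defined.

Lemma genD_cl {S : monoid} {B : act S} {X : Type} (b : X -> B) (vs : list X)
  (d : {d : B | exists x s', In x vs /\ d = actf B (b x) s'}) (s : S) :
  exists x s', In x vs /\ actf B (proj1_sig d) s = actf B (b x) s'.
Proof.
  destruct d as [d [x [s' [Hx ->]]]]; simpl.
  exists x, (mmul S s' s); split; [assumption|]. rewrite actfM; reflexivity.
Qed.

Definition genD {S : monoid} {B : act S} {X : Type} (b : X -> B) (vs : list X) : act S.
Proof.
  refine (@Act S {d : B | exists x s', In x vs /\ d = actf B (b x) s'}
    (fun d s => exist _ (actf B (proj1_sig d) s) (genD_cl b vs d s)) _ _).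
  - intros a; apply sig_eq; simpl; apply actf1.
  - intros a s t; apply sig_eq; simpl; apply actfM.
Defined.

Lemma genD_fin {S : monoid} {B : act S} {X : Type} (b : X -> B) (vs : list X) :
  fin_gen (genD b vs).
Proof.
  assert (L : forall l, incl l vs -> exists cs : list (genD b vs),
     forall x, In x l -> exists c, In c cs /\ proj1_sig c = b x).
  { induction l as [|x l IH]; intros Hl.
    - exists []; intros x [].
    - destruct IH as [cs Hcs]. { intros y Hy; apply Hl; right; exact Hy. }
      assert (Hx : exists x' s', In x' vs /\ b x = actf B (b x') s').
      { exists x, (mone S); split. apply Hl; left; reflexivity. rewrite actf1; reflexivity. }
      exists (exist _ (b x) Hx :: cs). intros y [<-|Hy].
      + exists (exist _ (b x) Hx); split; [left; reflexivity|reflexivity].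
      + destruct (Hcs y Hy) as [c [Hc1 Hc2]]. exists c; split; [right|]; assumption. }
  destruct (L vs (fun x h => h)) as [cs Hcs].
  exists cs. intros [d [x [s' [Hx Hd]]]].
  destruct (Hcs x Hx) as [c [Hc1 Hc2]].
  exists c; split; [assumption|]. exists s'. apply sig_eq; simpl.
  rewrite Hc2; assumption.
Qed.

Definition vars {S : monoid} {A : act S} {X : Type} (Sigma : list (equation A X)) : list X :=
  flat_map (fun e => match e with EqVar x _ y _ => [x; y] | EqConst x _ _ => [x] end) Sigma.

Definition tr {S : monoid} {A : act S} {X : Type} (u : X -> S) (e : equation A X)
  : equation A unit :=
  match e with
  | EqVar x s y t => EqVar tt (mmul S (u x) s) tt (mmul S (u y) t)
  | EqConst x s a => EqConst tt (mmul S (u x) s) a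
  end.

Theorem mainTheorem3 (S : monoid) (HS : fem S) (A : act S) :
  almost_pure A <-> absolutely_pure A.
Proof.
  split.
  2:{ intros H Sigma; apply H. }
  intros HA X Sigma [B [f [[Hfm Hfi] [b Hb]]]].
  set (vs := vars Sigma).
  set (D := genD b vs).
  destruct (HS D (genD_fin b vs)) as [E [g [Hg [c Hc]]]].
  assert (Hu : forall x, exists u : S, forall d : D, proj1_sig d = b x -> g d = actf E c u).
  { intros x. destruct (classic (exists d : D, proj1_sig d = b x)) as [[d Hd]|Hn].
    - destruct (Hc (g d)) as [u Hu]. exists u. intros d' Hd'.
      rewrite <- Hu. f_equal. apply sig_eq. congruence.
    - exists (mone S). intros d Hd; exfalso; eauto. }
  set (u := fun x => proj1_sig (constructive_indefinite_description _ (Hu x))).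
  assert (Hu' : forall x d, proj1_sig d = b x -> g d = actf E c (u x)).
  { intros x. unfold u. destruct (constructive_indefinite_description _ (Hu x)); simpl; auto. }
  assert (Hi : is_morph (fun d : D => proj1_sig d)) by (intros a s; reflexivity).
  set (P := amalgam (fun d : D => proj1_sig d) g Hi Hg).
  assert (Key : forall x s, In x vs ->
     actf P (amj (fun d : D => proj1_sig d) g c) (mmul S (u x) s) = inl (actf B (b x) s)).
  { intros x s Hx.
    assert (Hdx : exists x' s', In x' vs /\ b x = actf B (b x') s').
    { exists x, (mone S); split; [exact Hx| rewrite actf1; reflexivity]. }
    set (dx := exist _ (b x) Hdx : D).
    change (actf P (amj (fun d : D => proj1_sig d) g c) (mmul S (u x) s))
      with (amact (fun d : D => proj1_sig d) g (amj (fun d : D => proj1_sig d) g c) (mmul S (u x) s)).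
    rewrite <- amj_morph by assumption.
    rewrite actfM, <- (Hu' x dx eq_refl).
    destruct Hg as [Hgm Hgi].
    rewrite <- Hgm, amj_g by assumption. reflexivity. }
  assert (Hcons : consistent (map (tr u) Sigma)).
  { exists P, (fun a => inl (f a)). split.
    - split.
      + intros a s. simpl. rewrite Hfm. reflexivity.
      + intros x y H. injection H; intros; apply Hfi; assumption.
    - exists (fun _ => amj (fun d : D => proj1_sig d) g c).
      intros e' He'. apply in_map_iff in He'. destruct He' as [e [<- He]].
      pose proof (Hb e He) as Hbe.
      assert (Hin : forall x, In x (match e with EqVar x _ y _ => [x; y] | EqConst x _ _ => [x] end) -> In x vs).
      { intros x Hx. unfold vs, vars. apply in_flat_map. eauto. }
      destruct e as [x s y t|x s a]; simpl in *.
      + rewrite !Key by (apply Hin; simpl; auto). rewrite Hbe; reflexivity.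
      + rewrite Key by (apply Hin; simpl; auto). rewrite Hbe; reflexivity. }
  destruct (HA _ Hcons) as [y0 Hy0].
  exists (fun x => actf A (y0 tt) (u x)).
  intros e He. pose proof (Hy0 (tr u e) (in_map _ _ _ He)) as H.
  destruct e as [x s y t|x s a]; simpl in *.
  - rewrite <- !actfM. exact H.
  - rewrite <- actfM. exact H.
Qed.
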